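(* Let $k\ge2$ and let $\alpha(x)=\forall y\,([y^{-1}xy,x]=e)$. The first-order group formula $\beta(y)=\forall x\,(\alpha(x)\rightarrow y^{-1}xy=x^k)$ defines in $BS(1,k)$ the set $Ab$.
   Context: $BS(1,k)=\langle a,b\mid b^{-1}ab=a^k\rangle$, identified with $\mathbb{Z}[1/k]\rtimes\mathbb{Z}$ (pairs $(y,m)$, $y\in\mathbb{Z}[1/k]=\{zk^i:z,i\in\mathbb{Z}\}$, product $(y_1,m_1)(y_2,m_2)=(y_1+y_2k^{-m_1},m_1+m_2)$), with $a=(1,0)$, $b=(0,1)$; $a^y=(y,0)$ for $y\in\mathbb{Z}[1/k]$. $Ab=\{a^yb:y\in\mathbb{Z}[1/k]\}=\{(y,1):y\in\mathbb{Z}[1/k]\}$. The commutator is $[x,y]=x^{-1}y^{-1}xy$. *)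

(* Defs.v *)
(* BS(1,k) realised concretely as Z[1/k] x| Z, pairs (y,m)
   with y : rat lying in Z[1/k] and m : int. *)
From mathcomp Require Import all_boot all_order all_algebra.
Set Implicit Arguments. Unset Strict Implicit. Unset Printing Implicit Defensive.
Import Order.TTheory GRing.Theory Num.Theory.
Local Open Scope ring_scope.

Definition inZk (k : nat) (y : rat) : Prop :=
  exists (z i : int), y = z%:~R * (k%:R : rat) ^ i.

Definition BSel (k : nat) (g : rat * int) : Prop := inZk k g.1.

Definition bsmul (k : nat) (g h : rat * int) : rat * int :=
  (g.1 + h.1 * (k%:R : rat) ^ (- g.2), g.2 + h.2).

Definition bsinv (k : nat) (g : rat * int) : rat * int :=
  (- (g.1 * (k%:R : rat) ^ g.2), - g.2).

Definition bsone : rat * int := (0, 0).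

Definition bspow (k : nat) (g : rat * int) (n : nat) : rat * int :=
  iter n (bsmul k g) bsone.

Definition bscomm (k : nat) (x y : rat * int) : rat * int :=
  bsmul k (bsinv k x) (bsmul k (bsinv k y) (bsmul k x y)).

Definition bsconj (k : nat) (x y : rat * int) : rat * int :=
  bsmul k (bsinv k y) (bsmul k x y).

Definition bs_alpha (k : nat) (x : rat * int) : Prop :=
  forall y, BSel k y -> bscomm k (bsconj k x y) x = bsone.

Definition bs_beta (k : nat) (y : rat * int) : Prop :=
  forall x, BSel k x -> bs_alpha k x -> bsconj k x y = bspow k x k.

(* Main.v *)
Require Import Defs.
From mathcomp Require Import all_boot all_order all_algebra.
From mathcomp Require Import ring lra.
Import Order.TTheory GRing.Theory Num.Theory.
Local Open Scope ring_scope.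

Lemma kinj (K : rat) (h : 1 < K) (m n : int) : K ^ m = K ^ n -> m = n.
Proof.
move=> H; apply/eqP; rewrite eq_le -!(ler_eXz2l h) H lexx //.
Qed.

Lemma k_gt1 (k : nat) : (2 <= k)%N -> 1 < (k%:R : rat).
Proof. by move=> hk; rewrite (_ : 1 = 1%:R) // ltr_nat. Qed.

Lemma kN (k : nat) (m : int) : (2 <= k)%N ->
  (k%:R : rat) ^ (- m) = ((k%:R : rat) ^ m)^-1.
Proof. by move=> _; rewrite invr_expz. Qed.

Lemma kpow0 (k : nat) (m : int) : (2 <= k)%N -> (k%:R : rat) ^ m != 0.
Proof.
move=> hk; apply: expfz_neq0; have := k_gt1 k hk; lra.
Qed.

Lemma alpha0 (k : nat) (hk : (2 <= k)%N) (c : rat) : bs_alpha k (c, 0).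
Proof.
move=> [d m] _.
rewrite /bscomm /bsconj /bsmul /bsinv /bsone /=.
have hK := kpow0 k m hk.
rewrite !opprK ?oppr0 ?expr0z ?mulr1 ?add0r ?addr0 !addNr ?oppr0 ?expr0z ?mulr1 ?addr0.
congr (_, _).
ring.
Qed.

Lemma alpha_inv (k : nat) (hk : (2 <= k)%N) (x : rat * int) :
  bs_alpha k x -> x.2 = 0.
Proof.
case: x => c m /= H.
have := H (1, 0) ltac:(exists 1, 0; by rewrite expr0z mulr1).
rewrite /bscomm /bsconj /bsmul /bsinv /bsone /=.
rewrite !oppr0 !expr0z !mulr1 !addr0 !add0r.
case=> E _.
have hK := kpow0 k m hk.
rewrite opprK kN // in E.
set K := (k%:R : rat) ^ m in E hK.
have E2 : (K - 1) * (K - 1) = 0.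
  rewrite -oppr0 -{1}E. field. done.
move/eqP: E2; rewrite mulf_eq0 orbb subr_eq0 => /eqP E3.
apply: (@kinj _ (k_gt1 k hk) m 0); rewrite expr0z; exact E3.
Qed.

Lemma bspow0 (k : nat) (c : rat) (n : nat) : bspow k (c, 0) n = (c *+ n, 0).
Proof.
elim: n => [|n IH] //=.
rewrite /bspow /= in IH *. rewrite IH /bsmul /= oppr0 expr0z mulr1 addr0 mulrS //.
Qed.

Theorem lemma4p5 (k : nat) (hk : (2 <= k)%N) (g : rat * int) :
  BSel k g ->
  (bs_beta k g <-> exists y : rat, inZk k y /\ g = (y, 1%:Z)).
Proof.
case: g => y m /= Hy; split.
- move=> B; exists y; split => //.
  have := B (1, 0) ltac:(exists 1, 0; by rewrite expr0z mulr1) (alpha0 k hk 1).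
  rewrite bspow0 /bsconj /bsmul /bsinv /= => [[E _]].
  congr (_, _).
  apply: (@kinj _ (k_gt1 k hk)); rewrite expr1z.
  move: E; rewrite opprK oppr0 expr0z mulr1 => E.
  have -> : (k%:R : rat) ^ m = - (y * (k%:R : rat) ^ m) + (1 + y) * (k%:R : rat) ^ m by ring.
  by rewrite E.
- case=> y0 [Hy0 E0]; case: E0 => Ey Em; subst y m => -[c n] Hc A.
  have /= n0 := alpha_inv k hk (c, n) A; subst n.
  rewrite bspow0 /bsconj /bsmul /bsinv /=.
  congr (_, _).
  rewrite oppr0 expr0z mulr1 opprK expr1z mulr_natr. ring.
Qed.
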